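(* Let $P(q)=\sum_{j=0}^{n} q^{j}a_{j}$ be a slice regular polynomial of degree $n$ with quaternionic coefficients, and let $P'(q)=\sum_{j=1}^n q^{j-1}ja_j$. Then $$\|P'\|_{2}\leq n\|P\|_{2},$$ where for a slice regular function $f$ on the unit ball $\mathbb B$, $$\|f\|_{2}:=\sup_{I\in\mathbb S}\lim_{r\to1^{-}}\Big(\int_{0}^{2\pi}|f_{I}(re^{I\theta})|^{2}\,d\theta\Big)^{1/2}.$$ Moreover, equality holds if and only if $P(q)=q^{n}a_{n}$ for some $a_{n}\in\mathbb H$.
   Context: $\mathbb H$ denotes the quaternions with modulus $|q|=\sqrt{q\bar q}$; $\mathbb B=\{q\in\mathbb H:|q|<1\}$; $\mathbb S=\{q\in\mathbb H: q^2=-1\}$ is the sphere of imaginary units; for $I\in\mathbb S$, $\mathbb C_I=\mathbb R\oplus I\mathbb R$ and $f_I$ denotes the restriction of $f$ to $\mathbb B\cap\mathbb C_I$. A slice regular polynomial of degree $n$ is a function $q\mapsto\sum_{j=0}^n q^ja_j$, $a_j\in\mathbb H$, $a_n\neq0$. *)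

(* Defs.v *)
From HB Require Import structures.
From mathcomp Require Import all_boot all_order all_algebra.
From mathcomp Require Import all_classical all_reals all_analysis.
From mathcomp Require Import ring.
Set Implicit Arguments. Unset Strict Implicit. Unset Printing Implicit Defensive.
Import Order.TTheory GRing.Theory Num.Theory.
Import numFieldNormedType.Exports.
Local Open Scope classical_set_scope.
Local Open Scope ring_scope.

Record quat (R : realType) := Quat { q0 : R; q1 : R; q2 : R; q3 : R }.

Section Quaternions.
Variable R : realType.

Definition quat_to (q : quat R) := (q0 q, q1 q, q2 q, q3 q).
Definition quat_of (x : R * R * R * R) := let: (a, b, c, d) := x in Quat a b c d.
Lemma quat_toK : cancel quat_to quat_of. Proof. by case. Qed.

HB.instance Definition _ := Equality.copy (quat R) (can_type quat_toK).
HB.instance Definition _ := Choice.copy (quat R) (can_type quat_toK).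

Definition qzero : quat R := Quat 0 0 0 0.
Definition qone : quat R := Quat 1 0 0 0.
Definition qadd (p q : quat R) :=
  Quat (q0 p + q0 q) (q1 p + q1 q) (q2 p + q2 q) (q3 p + q3 q).
Definition qopp (p : quat R) := Quat (- q0 p) (- q1 p) (- q2 p) (- q3 p).
(* Hamilton product, i^2 = j^2 = k^2 = ijk = -1 *)
Definition qmul (p q : quat R) :=
  Quat (q0 p * q0 q - q1 p * q1 q - q2 p * q2 q - q3 p * q3 q)
       (q0 p * q1 q + q1 p * q0 q + q2 p * q3 q - q3 p * q2 q)
       (q0 p * q2 q - q1 p * q3 q + q2 p * q0 q + q3 p * q1 q)
       (q0 p * q3 q + q1 p * q2 q - q2 p * q1 q + q3 p * q0 q).

Lemma qaddA : associative qadd.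
Proof. by case=> ? ? ? ?; case=> ? ? ? ?; case=> ? ? ? ?; rewrite /qadd /= !addrA. Qed.
Lemma qaddC : commutative qadd.
Proof. by case=> ? ? ? ?; case=> ? ? ? ?; rewrite /qadd /= [X in Quat X _ _ _]addrC
  [X in Quat _ X _ _]addrC [X in Quat _ _ X _]addrC [X in Quat _ _ _ X]addrC. Qed.
Lemma qadd0 : left_id qzero qadd.
Proof. by case=> ? ? ? ?; rewrite /qadd /= !add0r. Qed.
Lemma qaddN : left_inverse qzero qopp qadd.
Proof. by case=> ? ? ? ?; rewrite /qadd /= !addNr. Qed.

HB.instance Definition _ := GRing.isZmodule.Build (quat R) qaddA qaddC qadd0 qaddN.

Lemma qmulA : associative qmul.
Proof. by case=> ? ? ? ?; case=> ? ? ? ?; case=> ? ? ? ?; rewrite /qmul /=; congr Quat; ring. Qed.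
Lemma qmul1 : left_id qone qmul.
Proof. by case=> ? ? ? ?; rewrite /qmul /=; congr Quat; ring. Qed.
Lemma qmulr1 : right_id qone qmul.
Proof. by case=> ? ? ? ?; rewrite /qmul /=; congr Quat; ring. Qed.
Lemma qmulDl : left_distributive qmul qadd.
Proof. by case=> ? ? ? ?; case=> ? ? ? ?; case=> ? ? ? ?; rewrite /qmul /= /qadd /=; congr Quat; ring. Qed.
Lemma qmulDr : right_distributive qmul qadd.
Proof. by case=> ? ? ? ?; case=> ? ? ? ?; case=> ? ? ? ?; rewrite /qmul /= /qadd /=; congr Quat; ring. Qed.
Lemma qone_neq0 : qone != 0.
Proof. by apply/eqP => -[] /eqP; rewrite oner_eq0. Qed.

HB.instance Definition _ := GRing.Zmodule_isNzRing.Build (quat R)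
  qmulA qmul1 qmulr1 qmulDl qmulDr qone_neq0.

Definition qreal (x : R) : quat R := Quat x 0 0 0.

Definition qnorm (q : quat R) : R :=
  Num.sqrt (q0 q ^+ 2 + q1 q ^+ 2 + q2 q ^+ 2 + q3 q ^+ 2).

Definition imag_units : set (quat R) := [set I | I * I = -1].

Definition rexpI (I : quat R) (r theta : R) : quat R :=
  qreal (r * cos theta) + I * qreal (r * sin theta).

Definition H2_slice (f : quat R -> quat R) (I : quat R) : R :=
  lim ((fun r : R => Num.sqrt (\int[lebesgue_measure]_(theta in `[0, 2 * pi]%classic)
          (qnorm (f (rexpI I r theta)) ^+ 2))) @ (1:R)^'-).

Definition H2norm (f : quat R -> quat R) : R :=
  sup [set x | exists2 I, imag_units I & x = H2_slice f I].

Definition spoly (n : nat) (a : nat -> quat R) (q : quat R) : quat R :=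
  \sum_(j < n.+1) q ^+ j * a j.

Definition spoly_deriv (n : nat) (a : nat -> quat R) (q : quat R) : quat R :=
  \sum_(1 <= j < n.+1) q ^+ j.-1 * (j%:R * a j).

End Quaternions.

(* Main.v *)
Require Import Defs.
From HB Require Import structures.
From mathcomp Require Import all_boot all_order all_algebra.
From mathcomp Require Import all_classical all_reals all_analysis.
From mathcomp Require Import ring lra.
Unset Printing Implicit Defensive.
Import Order.TTheory GRing.Theory Num.Theory.
Import numFieldNormedType.Exports.
Local Open Scope classical_set_scope.
Local Open Scope ring_scope.
Section S.
Context {R : realType}.


Notation mu := (@lebesgue_measure R).

Lemma lin_isd (m x : R) : is_derive x 1 (fun y : R => m * y) m.
Proof.
have D : is_derive x (1:R) (m \*: (@id R)) (m *: 1) by apply: is_deriveZ.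
by rewrite scaler1 in D.
Qed.

Lemma lin_derivable (m x : R) : derivable (fun y : R => m * y) x 1.
Proof. by case: (lin_isd m x). Qed.

Lemma lin_derive (m x : R) : ((fun y : R => m * y)^`() x)%classic = m.
Proof. by rewrite derive1E; case: (lin_isd m x). Qed.


Lemma sc_isd (k c : R) (f : R -> R) (df : R) (x : R) :
  is_derive x 1 f df -> is_derive x 1 (fun y => k * f y) (k * df).
Proof. move=> H; exact: (@is_deriveZ R R R f k x 1 df H). Qed.

Lemma comp_lin (m x : R) (g : R -> R) (dg : R) :
  is_derive (m * x) 1 g dg ->
  derivable (fun y => g (m * y)) x 1 /\ ((fun y => g (m * y))^`() x)%classic = dg * m.
Proof.
case=> dg1 dg2.
have d1 := lin_derivable m x.
have -> : (fun y => g (m * y)) = (g \o (fun y => m * y))%FUN by [].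
split.
  apply/derivable1_diffP; apply: differentiable_comp; exact/derivable1_diffP.
by rewrite derive1_comp // lin_derive derive1E dg2.
Qed.

Lemma Rint_FTC (F f : R -> R) (a b : R) : a < b -> continuous f ->
  (forall x, derivable F x 1) -> (forall x, (F^`() x)%classic = f x) ->
  \int[mu]_(x in `[a, b]) f x = F b - F a.
Proof.
move=> ab cf dF dFf.
have cF : continuous F.
  by move=> x; apply: differentiable_continuous; apply/derivable1_diffP.
rewrite /Rintegral (@continuous_FTC2 R f F a b ab) //.
- by apply: continuous_subspaceT.
- split.
  + by move=> x _; exact: dF.
  + exact: cvg_at_right_filter (cF a).
  + exact: cvg_at_left_filter (cF b).
Qed.

Lemma cont_lin (m : R) (g : R -> R) : (forall x, derivable g x 1) ->
  continuous (fun y => g (m * y)).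
Proof.
move=> dg x; apply: differentiable_continuous.
have -> : (fun y => g (m * y)) = (g \o (fun y => m * y))%FUN by [].
apply: differentiable_comp; apply/derivable1_diffP; [exact: lin_derivable| exact: dg].
Qed.

Lemma trig_int_period (m : int) : cos (m%:~R * (2 * pi)) = 1 :> R /\ sin (m%:~R * (2 * pi)) = 0 :> R.
Proof.
have P (n : nat) : cos (n%:R * (2 * pi)) = 1 :> R /\ sin (n%:R * (2 * pi)) = 0 :> R.
  have -> : n%:R * (2 * pi) = 0 + (pi *+ 2) *+ n :> R.
    rewrite add0r -mulr_natl -[pi *+ 2]mulr_natl; ring.
  by rewrite (periodicn (@cosD2pi R)) (periodicn (@sinD2pi R)) cos0 sin0.
case: m => n; first by rewrite pmulrn; exact: P.
rewrite NegzE mulrNz mulNr cosN sinN; have [c s] := P n.+1.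
by rewrite pmulrn c s oppr0.
Qed.

Lemma twopi_gt0 : (0:R) < 2 * pi.
Proof. by rewrite mulr_gt0 // pi_gt0. Qed.

Lemma int_cos (m : int) : m != 0 ->
  \int[mu]_(x in `[0, 2 * pi]) cos (m%:~R * x) = 0.
Proof.
move=> m0; have mR : (m%:~R : R) != 0 by rewrite intr_eq0.
set k := (m%:~R : R)^-1.
have D x := comp_lin m%:~R x _ _ (@sc_isd k 0 _ _ _ (is_derive_sin (m%:~R * x))).
rewrite (@Rint_FTC (fun y => k * sin (m%:~R * y))) //.
- by rewrite !mulr0 sin0 mulr0 subr0 (trig_int_period m).2 mulr0.
- exact: twopi_gt0.
- by move=> x; exact: (@cont_lin (m%:~R) cos (@derivable_cos R) x).
- by move=> x; case: (D x) => _ ->; rewrite mulrAC mulVf // mul1r.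
Qed.

Lemma int_sin (m : int) :
  \int[mu]_(x in `[0, 2 * pi]) sin (m%:~R * x) = 0.
Proof.
have [->|m0] := eqVneq m 0.
  under eq_Rintegral do rewrite mul0r sin0.
  by rewrite Rintegral_cst ?mul0r.
have mR : (m%:~R : R) != 0 by rewrite intr_eq0.
set k := - (m%:~R : R)^-1.
have D x := comp_lin m%:~R x _ _ (@sc_isd k 0 _ _ _ (is_derive_cos (m%:~R * x))).
rewrite (@Rint_FTC (fun y => k * cos (m%:~R * y))) //.
- by rewrite !mulr0 cos0 (trig_int_period m).1 subrr.
- exact: twopi_gt0.
- by move=> x; exact: (@cont_lin (m%:~R) sin (@derivable_sin R) x).
- by move=> x; case: (D x) => _ ->; rewrite /k mulrNN mulrAC mulVf // mul1r.
Qed.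

Lemma int_const (c : R) : \int[mu]_(x in `[0, 2 * pi]) c = c * (2 * pi).
Proof.
rewrite Rintegral_cst //; congr (_ * _).
have := @lebesgue_measure_itv R `[0, 2 * pi]%R.
rewrite /= lte_fin twopi_gt0 => ->. by rewrite /= subr0.
Qed.

Notation I02 := (`[(0:R), 2 * pi]%classic : set R).

Lemma cint (f : R -> R) : continuous f -> mu.-integrable I02 (EFin \o f).
Proof.
move=> cf; apply: continuous_compact_integrable; first exact: segment_compact.
exact: continuous_subspaceT.
Qed.

Lemma cont_cosl (m : R) : continuous (fun x : R => cos (m * x)).
Proof. by move=> x; exact: (@cont_lin m cos (@derivable_cos R) x). Qed.
Lemma cont_sinl (m : R) : continuous (fun x : R => sin (m * x)).
Proof. by move=> x; exact: (@cont_lin m sin (@derivable_sin R) x). Qed.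

Lemma Icos (m : int) : \int[mu]_(x in I02) cos (m%:~R * x) = (m == 0)%:R * (2 * pi).
Proof.
have [->|m0] := eqVneq m 0; last by rewrite int_cos // mul0r.
under eq_Rintegral do rewrite mul0r cos0.
by rewrite int_const mul1r.
Qed.

Lemma natint_add (j k : nat) (x : R) : j%:R * x + k%:R * x = ((j%:Z + k%:Z)%:~R) * x.
Proof. by rewrite intrD mulrDl. Qed.
Lemma natint_sub (j k : nat) (x : R) : j%:R * x - k%:R * x = ((j%:Z - k%:Z)%:~R) * x.
Proof. by rewrite intrB mulrBl. Qed.

Lemma cont_mulc (f : R -> R) (c : R) : continuous f -> continuous (fun x => f x * c).
Proof. move=> cf x. apply: (@continuous_comp _ _ _ f (fun y => y * c) x (cf x)). exact: mulrr_continuous. Qed.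
Lemma cont_add (f g : R -> R) : continuous f -> continuous g -> continuous (fun x => f x + g x).
Proof. move=> cf cg x. exact: (@continuousD _ _ _ f g x (cf x) (cg x)). Qed.
Lemma cont_mul (f g : R -> R) : continuous f -> continuous g -> continuous (fun x => f x * g x).
Proof. move=> cf cg x. exact: (@continuousM _ _ f g x (cf x) (cg x)). Qed.

Lemma Icc (j k : nat) : \int[mu]_(x in I02) (cos (j%:R * x) * cos (k%:R * x)) =
  ((j == k)%:R + (j + k == 0)%N%:R) * pi.
Proof.
have E (x : R) : cos (j%:R * x) * cos (k%:R * x) =
    cos (((j%:Z - k%:Z)%:~R) * x) / 2 + cos (((j%:Z + k%:Z)%:~R) * x) / 2.
  by rewrite !intrD !intrN !pmulrn !mulrDl !mulNr !cosD cosN sinN; field.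
under eq_Rintegral do rewrite E.
rewrite RintegralD //; last 2 first.
- by apply: cint; apply: cont_mulc; exact: cont_cosl.
- by apply: cint; apply: cont_mulc; exact: cont_cosl.
rewrite !RintegralZr //; last 2 first.
- by apply: cint; exact: cont_cosl.
- by apply: cint; exact: cont_cosl.
by rewrite !Icos subr_eq0 -PoszD !eqz_nat; field.
Qed.

Lemma Iss (j k : nat) : \int[mu]_(x in I02) (sin (j%:R * x) * sin (k%:R * x)) =
  ((j == k)%:R - (j + k == 0)%N%:R) * pi.
Proof.
have E (x : R) : sin (j%:R * x) * sin (k%:R * x) =
    cos (((j%:Z - k%:Z)%:~R) * x) / 2 - cos (((j%:Z + k%:Z)%:~R) * x) / 2.
  by rewrite !intrD !intrN !pmulrn !mulrDl !mulNr !cosD cosN sinN; field.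
under eq_Rintegral do rewrite E.
rewrite RintegralB //; last 2 first.
- by apply: cint; apply: cont_mulc; exact: cont_cosl.
- by apply: cint; apply: cont_mulc; exact: cont_cosl.
rewrite !RintegralZr //; last 2 first.
- by apply: cint; exact: cont_cosl.
- by apply: cint; exact: cont_cosl.
by rewrite !Icos subr_eq0 -PoszD !eqz_nat; field.
Qed.

Lemma Ics (j k : nat) : \int[mu]_(x in I02) (cos (j%:R * x) * sin (k%:R * x)) = 0.
Proof.
have E (x : R) : cos (j%:R * x) * sin (k%:R * x) =
    sin (((j%:Z + k%:Z)%:~R) * x) / 2 - sin (((j%:Z - k%:Z)%:~R) * x) / 2.
  by rewrite !intrD !intrN !pmulrn !mulrDl !mulNr !sinD cosN sinN; field.
under eq_Rintegral do rewrite E.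
rewrite RintegralB //; last 2 first.
- by apply: cint; apply: cont_mulc; exact: cont_sinl.
- by apply: cint; apply: cont_mulc; exact: cont_sinl.
rewrite !RintegralZr //; last 2 first.
- by apply: cint; exact: cont_sinl.
- by apply: cint; exact: cont_sinl.
by rewrite !int_sin !mul0r subrr.
Qed.


Implicit Types (p q x y : quat R).

Definition qdot p q := q0 p * q0 q + q1 p * q1 q + q2 p * q2 q + q3 p * q3 q.

Lemma qaddE p q : p + q = Quat (q0 p + q0 q) (q1 p + q1 q) (q2 p + q2 q) (q3 p + q3 q).
Proof. by []. Qed.
Lemma qmulE p q : p * q = qmul p q.
Proof. by []. Qed.
Lemma qoppE p : - p = Quat (- q0 p) (- q1 p) (- q2 p) (- q3 p).
Proof. by []. Qed.
Lemma q0E : (0 : quat R) = Quat 0 0 0 0. Proof. by []. Qed.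
Lemma q1E : (1 : quat R) = Quat 1 0 0 0. Proof. by []. Qed.

Lemma qrealC (a : R) q : qreal a * q = q * qreal a.
Proof. case: q => *; rewrite !qmulE /qmul /qreal /=; congr Quat; ring. Qed.
Lemma qrealD (a b : R) : qreal (a + b) = qreal a + qreal b.
Proof. by rewrite qaddE /qreal /= addr0. Qed.
Lemma qrealM (a b : R) : qreal (a * b) = qreal a * qreal b.
Proof. rewrite qmulE /qmul /qreal /=; congr Quat; ring. Qed.
Lemma qrealN (a : R) : qreal (- a) = - qreal a.
Proof. by rewrite qoppE /qreal /= oppr0. Qed.
Lemma qreal1 : qreal 1 = 1 :> quat R. Proof. by []. Qed.

Lemma qdotDl x y q : qdot (x + y) q = qdot x q + qdot y q.
Proof. rewrite /qdot qaddE /=; ring. Qed.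
Lemma qdotDr x y q : qdot q (x + y) = qdot q x + qdot q y.
Proof. rewrite /qdot qaddE /=; ring. Qed.
Lemma qdot0l q : qdot 0 q = 0.
Proof. rewrite /qdot q0E /=; ring. Qed.
Lemma qdot0r q : qdot q 0 = 0.
Proof. rewrite /qdot q0E /=; ring. Qed.
Lemma qdotZl (c : R) x q : qdot (qreal c * x) q = c * qdot x q.
Proof. rewrite /qdot qmulE /qmul /qreal /=; ring. Qed.
Lemma qdotZr (c : R) x q : qdot q (qreal c * x) = c * qdot q x.
Proof. rewrite /qdot qmulE /qmul /qreal /=; ring. Qed.
Lemma qdot_ge0 q : 0 <= qdot q q.
Proof. by rewrite /qdot -!expr2 !addr_ge0 // sqr_ge0. Qed.
Lemma qnorm2 q : qnorm q ^+ 2 = qdot q q.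
Proof.
rewrite /qnorm sqr_sqrtr; first by rewrite /qdot !expr2.
by have := qdot_ge0 q; rewrite /qdot !expr2.
Qed.
Lemma qdot_eq0 q : qdot q q = 0 -> q = 0.
Proof.
case: q => a b c d; rewrite /qdot /= => H.
have ha : a = 0 by nra.
have hb : b = 0 by nra.
have hc : c = 0 by nra.
have hd : d = 0 by nra.
by rewrite ha hb hc hd.
Qed.

Lemma qsumL (I : Type) (s : seq I) (P : pred I) (F : I -> quat R) q :
  qdot (\sum_(i <- s | P i) F i) q = \sum_(i <- s | P i) qdot (F i) q.
Proof. by apply: (big_morph (qdot^~ q)) => [x y|]; [exact: qdotDl| exact: qdot0l]. Qed.
Lemma qsumR (I : Type) (s : seq I) (P : pred I) (F : I -> quat R) q :
  qdot q (\sum_(i <- s | P i) F i) = \sum_(i <- s | P i) qdot q (F i).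
Proof. by apply: (big_morph (qdot q)) => [x y|]; [exact: qdotDr| exact: qdot0r]. Qed.

Lemma imag_facts (I : quat R) : I * I = -1 ->
  forall b, qdot (I * b) b = 0 /\ qdot b (I * b) = 0 /\ qdot (I * b) (I * b) = qdot b b.
Proof.
case: I => i0 i1 i2 i3; rewrite qmulE qoppE q1E /qmul /= => -[e0 e1 e2 e3].
have h0 : i0 = 0 by nra.
have hs : i1 ^+ 2 + i2 ^+ 2 + i3 ^+ 2 = 1 by rewrite h0 in e0; nra.
move=> [b0 b1 b2 b3]; rewrite /qdot /= h0; split; [ring| split; [ring|]].
have -> : b0 * b0 + b1 * b1 + b2 * b2 + b3 * b3 =
  (i1 ^+ 2 + i2 ^+ 2 + i3 ^+ 2) * (b0 * b0 + b1 * b1 + b2 * b2 + b3 * b3) by rewrite hs mul1r.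
ring.
Qed.

Lemma mulZ_gen (I : quat R) (a b c d : R) :
  (qreal a + I * qreal b) * (qreal c + I * qreal d) =
  qreal (a * c) + I * qreal (a * d + b * c) + (I * I) * qreal (b * d).
Proof.
case: I => i0 i1 i2 i3; rewrite !qmulE !qaddE /qmul /qreal /=; congr Quat; ring.
Qed.

Lemma mulZ (I : quat R) (hI : I * I = -1) (a b c d : R) :
  (qreal a + I * qreal b) * (qreal c + I * qreal d) =
  qreal (a * c - b * d) + I * qreal (a * d + b * c).
Proof.
rewrite mulZ_gen hI mulN1r -qrealN -addrA [I * _ + _]addrC addrA -qrealD.
by [].
Qed.

Definition rexpI' (I : quat R) (r t : R) := qreal (r * cos t) + I * qreal (r * sin t).

Lemma demoivre (I : quat R) (hI : I * I = -1) (r t : R) (j : nat) :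
  (rexpI I r t) ^+ j = qreal (r ^+ j * cos (j%:R * t)) + I * qreal (r ^+ j * sin (j%:R * t)).
Proof.
elim: j => [|j IH].
  by rewrite expr0 !mul0r cos0 sin0 !mulr1 mulr0 qreal1 -[qreal 0]/(0 : quat R) mulr0 addr0.
rewrite exprSr IH /rexpI mulZ // -[(j.+1)%:R]natr1 mulrDl mul1r cosD sinD.
congr (qreal _ + I * qreal _); rewrite exprSr; ring.
Qed.

Lemma term_expand (I : quat R) (hI : I * I = -1) (r t : R) (j : nat) (b : quat R) :
  (rexpI I r t) ^+ j * b =
  qreal (r ^+ j * cos (j%:R * t)) * b + qreal (r ^+ j * sin (j%:R * t)) * (I * b).
Proof. by rewrite demoivre // mulrDl -!mulrA mulrA -qrealC mulrA. Qed.


Lemma cont_cst (c : R) : continuous (fun _ : R => c).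
Proof. by move=> t; exact: cvg_cst. Qed.

Lemma cont_sum (N : nat) (F : 'I_N -> R -> R) : (forall i, continuous (F i)) ->
  continuous (fun t => \sum_(i < N) F i t).
Proof.
elim: N F => [|N IH] F cF.
  by under eq_fun do rewrite big_ord0; exact: cont_cst.
under eq_fun do rewrite big_ord_recr /=.
apply: cont_add; last exact: cF.
exact: (IH (fun i => F (widen_ord (leqnSn N) i))).
Qed.

Lemma Rint_sum (N : nat) (F : 'I_N -> R -> R) : (forall i, continuous (F i)) ->
  \int[mu]_(t in I02) (\sum_(i < N) F i t) = \sum_(i < N) \int[mu]_(t in I02) F i t.
Proof.
elim: N F => [|N IH] F cF.
  under eq_Rintegral do rewrite big_ord0.
  by rewrite big_ord0 int_const mul0r.
under eq_Rintegral do rewrite big_ord_recr /=.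
rewrite RintegralD //; last 2 first.
- by apply: cint; apply: cont_sum => i; exact: cF.
- exact: cint.
by rewrite big_ord_recr /= (IH (fun i => F (widen_ord (leqnSn N) i))).
Qed.

Lemma Rint_Zl (c : R) (f : R -> R) : continuous f ->
  \int[mu]_(t in I02) (c * f t) = c * \int[mu]_(t in I02) f t.
Proof. by move=> cf; rewrite RintegralZl //; exact: cint. Qed.

Lemma Rint_D (f g : R -> R) : continuous f -> continuous g ->
  \int[mu]_(t in I02) (f t + g t) = \int[mu]_(t in I02) f t + \int[mu]_(t in I02) g t.
Proof. by move=> cf cg; rewrite RintegralD //; exact: cint. Qed.

Lemma cont_cc (j k : nat) : continuous (fun t : R => cos (j%:R * t) * cos (k%:R * t)).
Proof. by apply: cont_mul; exact: cont_cosl. Qed.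
Lemma cont_cs (j k : nat) : continuous (fun t : R => cos (j%:R * t) * sin (k%:R * t)).
Proof. by apply: cont_mul; [exact: cont_cosl| exact: cont_sinl]. Qed.
Lemma cont_sc (j k : nat) : continuous (fun t : R => sin (j%:R * t) * cos (k%:R * t)).
Proof. by apply: cont_mul; [exact: cont_sinl| exact: cont_cosl]. Qed.
Lemma cont_ss (j k : nat) : continuous (fun t : R => sin (j%:R * t) * sin (k%:R * t)).
Proof. by apply: cont_mul; exact: cont_sinl. Qed.

Lemma Isc (j k : nat) : \int[mu]_(t in I02) (sin (j%:R * t) * cos (k%:R * t)) = 0.
Proof. by under eq_Rintegral do rewrite mulrC; exact: Ics. Qed.

Definition hterm (I : quat R) (r : R) (b : nat -> quat R) (j k : nat) (t : R) :=
  (r ^+ j * r ^+ k) *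
  (qdot (b j) (b k) * (cos (j%:R * t) * cos (k%:R * t)) +
   qdot (b j) (I * b k) * (cos (j%:R * t) * sin (k%:R * t)) +
   qdot (I * b j) (b k) * (sin (j%:R * t) * cos (k%:R * t)) +
   qdot (I * b j) (I * b k) * (sin (j%:R * t) * sin (k%:R * t))).

Lemma cont_hterm I r b j k : continuous (hterm I r b j k).
Proof.
apply: cont_mul; first exact: cont_cst.
repeat apply: cont_add; apply: cont_mul; try exact: cont_cst.
- exact: cont_cc. - exact: cont_cs. - exact: cont_sc. - exact: cont_ss.
Qed.

Lemma int_hterm I (hI : I * I = -1) r b j k :
  \int[mu]_(t in I02) hterm I r b j k t =
  (j == k)%:R * (r ^+ j * r ^+ k * qdot (b j) (b k) * (2 * pi)).
Proof.
rewrite /hterm Rint_Zl; last first.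
  repeat apply: cont_add; apply: cont_mul; try exact: cont_cst.
  - exact: cont_cc. - exact: cont_cs. - exact: cont_sc. - exact: cont_ss.
rewrite Rint_D; last 2 first.
- repeat apply: cont_add; apply: cont_mul; try exact: cont_cst.
  + exact: cont_cc. + exact: cont_cs. + exact: cont_sc.
- apply: cont_mul; [exact: cont_cst| exact: cont_ss].
rewrite Rint_D; last 2 first.
- repeat apply: cont_add; apply: cont_mul; try exact: cont_cst.
  + exact: cont_cc. + exact: cont_cs.
- apply: cont_mul; [exact: cont_cst| exact: cont_sc].
rewrite Rint_D; last 2 first.
- apply: cont_mul; [exact: cont_cst| exact: cont_cc].
- apply: cont_mul; [exact: cont_cst| exact: cont_cs].
rewrite !Rint_Zl; try (exact: cont_cc || exact: cont_cs || exact: cont_sc || exact: cont_ss).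
rewrite Icc Ics Isc Iss !mulr0 !addr0.
have [<-|jk] := eqVneq j k.
  have [_ [_ ->]] := imag_facts I hI (b j).
  rewrite /= ?mulr1n ?mulr0n; ring.
have -> : (j + k == 0)%N = false.
  by apply/negbTE; move: jk; apply: contra; rewrite addn_eq0 => /andP[/eqP-> /eqP->].
rewrite /= ?mulr1n ?mulr0n; ring.
Qed.

Lemma integrand_expand (I : quat R) (hI : I * I = -1) (r t : R) (N : nat) (b : nat -> quat R) :
  qnorm (\sum_(j < N) (rexpI I r t) ^+ j * b j) ^+ 2 =
  \sum_(j < N) \sum_(k < N) hterm I r b j k t.
Proof.
rewrite qnorm2 qsumL; apply: eq_bigr => j _; rewrite qsumR; apply: eq_bigr => k _.
rewrite !term_expand // /hterm !qdotDl !qdotDr !qdotZl !qdotZr; ring.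
Qed.

Lemma slice_integral (I : quat R) (hI : I * I = -1) (r : R) (N : nat) (b : nat -> quat R) :
  \int[mu]_(t in I02) (qnorm (\sum_(j < N) (rexpI I r t) ^+ j * b j) ^+ 2) =
  2 * pi * \sum_(j < N) r ^+ j * r ^+ j * qdot (b j) (b j).
Proof.
under eq_Rintegral do rewrite integrand_expand //.
rewrite Rint_sum; last by move=> j; apply: cont_sum => k; exact: cont_hterm.
rewrite big_distrr /=; apply: eq_bigr => j _.
rewrite Rint_sum; last by move=> k; exact: cont_hterm.
under eq_bigr do rewrite int_hterm //.
rewrite (bigD1 j) //= big1 ?addr0; first by rewrite eqxx /= mul1r mulrC.
move=> k kj; rewrite (_ : (j : nat) == k = false) ?mul0r //.
by apply/negbTE; rewrite eq_sym.
Qed.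

Lemma cont_poly2 (N : nat) (c : nat -> R) :
  continuous (fun r : R => Num.sqrt (2 * pi * \sum_(j < N) r ^+ j * r ^+ j * c j)).
Proof.
move=> r; apply: (@continuous_comp _ _ _ (fun r : R => 2 * pi * \sum_(j < N) r ^+ j * r ^+ j * c j) Num.sqrt r).
  apply: cont_mul; first exact: cont_cst.
  apply: cont_sum => j.
  apply: cont_mulc; apply: cont_mul; exact: exprn_continuous.
exact: sqrt_continuous.
Qed.

Lemma H2_slice_poly (I : quat R) (hI : I * I = -1) (N : nat) (b : nat -> quat R) :
  H2_slice (fun q => \sum_(j < N) q ^+ j * b j) I =
  Num.sqrt (2 * pi * \sum_(j < N) qdot (b j) (b j)).
Proof.
rewrite /H2_slice.
have -> : (fun r : R => Num.sqrt (\int[mu]_(t in I02)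
       (qnorm (\sum_(j < N) (rexpI I r t) ^+ j * b j) ^+ 2))) =
   (fun r : R => Num.sqrt (2 * pi * \sum_(j < N) r ^+ j * r ^+ j * qdot (b j) (b j))).
  by apply/funext => r; rewrite slice_integral.
apply: cvg_lim => //.
have := cvg_at_left_filter (cont_poly2 N (fun j => qdot (b j) (b j)) 1).
by under eq_bigr do rewrite expr1n !mul1r.
Qed.

Lemma qrealX (x : R) (j : nat) : qreal x ^+ j = qreal (x ^+ j).
Proof.
elim: j => [|j IH]; first by rewrite !expr0.
by rewrite !exprS IH qrealM.
Qed.

Lemma coef_extract_gen (P : quat R -> R) (PD : forall x y, P (x + y) = P x + P y)
  (P0 : P 0 = 0) (PZ : forall (y : R) b, P (qreal y * b) = y * P b)
  (n : nat) (a : nat -> quat R) (c : quat R) :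
  (forall q, \sum_(j < n.+1) q ^+ j * a j = q ^+ n * c) ->
  forall j, (j < n)%N -> P (a j) = 0.
Proof.
move=> H j jn.
pose p := \poly_(i < n.+1) (P (a i) - (i == n)%:R * P c).
have rt : forall x : R, p.[x] = 0.
  move=> x; rewrite horner_poly.
  have E : \sum_(i < n.+1) x ^+ i * P (a i) = x ^+ n * P c.
    have := congr1 P (H (qreal x)); rewrite (big_morph P PD P0) qrealX PZ => <-.
    by apply: eq_bigr => i _; rewrite qrealX PZ.
  rewrite big_ord_recr /= eqxx mul1r.
  have -> : \sum_(i < n) (P (a i) - ((i : nat) == n)%:R * P c) * x ^+ i =
      \sum_(i < n) x ^+ i * P (a i).
    apply: eq_bigr => i _; rewrite (_ : (i : nat) == n = false).
      by rewrite mul0r subr0 mulrC.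
    by apply/negbTE; rewrite neq_ltn ltn_ord.
  move: E; rewrite big_ord_recr /= => E.
  by rewrite mulrBl addrA [P (a n) * _]mulrC E [P c * _]mulrC subrr.
have p0 : p = 0.
  apply: (@roots_geq_poly_eq0 _ p [seq i%:R | i <- iota 0 n.+1]).
  - by apply/allP => x _; rewrite /root rt.
  - rewrite map_inj_uniq ?iota_uniq //; exact: (mulrIn (@oner_neq0 R)).
  - by rewrite size_map size_iota; exact: size_poly.
have := congr1 (fun p : {poly R} => p`_j) p0.
rewrite coef_poly coef0 ltnS (ltnW jn) (_ : (j == n) = false) ?mul0r ?subr0 //.
by apply/negbTE; rewrite neq_ltn jn.
Qed.

Lemma coef_extract (n : nat) (a : nat -> quat R) (c : quat R) :
  (forall q, \sum_(j < n.+1) q ^+ j * a j = q ^+ n * c) ->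
  forall j, (j < n)%N -> a j = 0.
Proof.
move=> H j jn.
have e0 := @coef_extract_gen (@q0 R) (fun x y => erefl) erefl
  (fun (y : R) b => ltac:(rewrite qmulE /qmul /qreal /=; ring)) n a c H j jn.
have e1 := @coef_extract_gen (@q1 R) (fun x y => erefl) erefl
  (fun (y : R) b => ltac:(rewrite qmulE /qmul /qreal /=; ring)) n a c H j jn.
have e2 := @coef_extract_gen (@q2 R) (fun x y => erefl) erefl
  (fun (y : R) b => ltac:(rewrite qmulE /qmul /qreal /=; ring)) n a c H j jn.
have e3 := @coef_extract_gen (@q3 R) (fun x y => erefl) erefl
  (fun (y : R) b => ltac:(rewrite qmulE /qmul /qreal /=; ring)) n a c H j jn.
by move: e0 e1 e2 e3; case: (a j) => /= ? ? ? ? -> -> -> ->.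
Qed.

Lemma H2norm_poly (N : nat) (b : nat -> quat R) :
  H2norm (fun q => \sum_(j < N) q ^+ j * b j) =
  Num.sqrt (2 * pi * \sum_(j < N) qdot (b j) (b j)).
Proof.
rewrite /H2norm.
set v := Num.sqrt _.
have hi : (Quat 0 1 0 0 : quat R) * Quat 0 1 0 0 = -1.
  rewrite qmulE qoppE q1E /qmul /=; congr Quat; ring.
have -> : [set x | exists2 I, imag_units I & x = H2_slice (fun q => \sum_(j < N) q ^+ j * b j) I]
    = [set v].
  apply/seteqP; split => x /=.
    by case=> I hI ->; rewrite H2_slice_poly.
  by move=> ->; exists (Quat 0 1 0 0) => //; rewrite H2_slice_poly.
exact: sup1.
Qed.

Lemma qnat (k : nat) : (k%:R : quat R) = qreal k%:R.
Proof.
elim: k => [|k IH]; first by [].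
by rewrite -natr1 IH -natr1 qrealD.
Qed.

Lemma deriv_eq (n : nat) (a : nat -> quat R) :
  spoly_deriv n a = (fun q => \sum_(j < n) q ^+ j * ((j.+1)%:R * a j.+1)).
Proof.
apply/funext => q; rewrite /spoly_deriv big_add1 /= big_mkord.
by [].
Qed.

Lemma key_ident (n : nat) (s : nat -> R) :
  n%:R ^+ 2 * \sum_(j < n.+1) s j - \sum_(j < n) (j.+1)%:R ^+ 2 * s j.+1 =
  n%:R ^+ 2 * s 0%N + \sum_(j < n) (n%:R ^+ 2 - (j.+1)%:R ^+ 2) * s j.+1.
Proof.
rewrite big_ord_recl mulrDr -addrA; congr (_ + _).
rewrite big_distrr /= -sumrB; apply: eq_bigr => j _.
by rewrite mulrBl.
Qed.
End S.

Local Close Scope classical_set_scope.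

Theorem theorem1p4 (R : realType) (n : nat) (a : nat -> quat R) (han : a n != 0) :
  H2norm (spoly_deriv n a) <= n%:R * H2norm (spoly n a) /\
  (H2norm (spoly_deriv n a) = n%:R * H2norm (spoly n a) <->
   exists c : quat R, forall q : quat R, spoly n a q = q ^+ n * c).
Proof.
set S := \sum_(j < n.+1) qdot (a j) (a j).
set T := \sum_(j < n) (j.+1)%:R ^+ 2 * qdot (a j.+1) (a j.+1).
have HP : H2norm (spoly n a) = Num.sqrt (2 * pi * S) := H2norm_poly (n.+1) a.
have HD : H2norm (spoly_deriv n a) = Num.sqrt (2 * pi * T).
  rewrite deriv_eq (H2norm_poly n (fun j => (j.+1)%:R * a j.+1)); congr (Num.sqrt (_ * _)); apply: eq_bigr => j _.
  by rewrite qnat qdotZl qdotZr mulrA -expr2.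
have KI : n%:R ^+ 2 * S - T = n%:R ^+ 2 * qdot (a 0%N) (a 0%N) +
    \sum_(j < n) (n%:R ^+ 2 - (j.+1)%:R ^+ 2) * qdot (a j.+1) (a j.+1).
  exact: (key_ident n (fun j => qdot (a j) (a j))).
have hs : forall j, 0 <= qdot (a j) (a j) by move=> j; exact: qdot_ge0.
have S0 : 0 <= S by apply: sumr_ge0 => j _.
have pi0 : (0 : R) < 2 * pi by exact: twopi_gt0.
have En : n%:R * H2norm (spoly n a) = Num.sqrt (2 * pi * (n%:R ^+ 2 * S)).
  by rewrite HP mulrCA (@sqrtrM _ (n%:R ^+ 2) (2 * pi * S)) ?sqr_ge0 // sqrtr_sqr ger0_norm.
have coef_ge0 : forall j : 'I_n, (0 : R) <= n%:R ^+ 2 - (j.+1)%:R ^+ 2.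
  move=> j; rewrite subr_ge0 -!natrX ler_nat leq_exp2r //; exact: ltn_ord.
have A0 : 0 <= n%:R ^+ 2 * qdot (a 0%N) (a 0%N) by rewrite mulr_ge0 ?sqr_ge0.
have B0 : 0 <= \sum_(j < n) (n%:R ^+ 2 - (j.+1)%:R ^+ 2) * qdot (a j.+1) (a j.+1).
  by apply: sumr_ge0 => j _; rewrite mulr_ge0.
have D0 : 0 <= n%:R ^+ 2 * S - T by rewrite KI addr_ge0.
have T0 : 0 <= T by apply: sumr_ge0 => j _; rewrite mulr_ge0 ?sqr_ge0.
have nS0 : 0 <= n%:R ^+ 2 * S by rewrite mulr_ge0 ?sqr_ge0.
split.
  rewrite HD En ler_sqrt; last by rewrite mulr_ge0 // ltW.
  by rewrite ler_pM2l // -subr_ge0.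
split.
  rewrite HD En => /eqP; rewrite eqr_sqrt; last 2 first.
  - exact: mulr_ge0 (ltW pi0) T0.
  - exact: mulr_ge0 (ltW pi0) nS0.
  move=> /eqP /(mulfI (lt0r_neq0 pi0)) TE.
  have : n%:R ^+ 2 * S - T = 0 by rewrite TE subrr.
  rewrite KI => /eqP; rewrite paddr_eq0 // => /andP[/eqP Z0 /eqP Z1].
  have ha : forall j, (j < n)%N -> a j = 0.
    case=> [|i] lt.
      apply: qdot_eq0; move/eqP: Z0; rewrite mulf_eq0 => /orP[|/eqP //].
      by rewrite sqrf_eq0 pnatr_eq0 => /eqP n0; rewrite n0 in lt.
    have := @psumr_eq0P R _ predT
      (fun j : 'I_n => (n%:R ^+ 2 - (j.+1)%:R ^+ 2) * qdot (a j.+1) (a j.+1))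
      (fun j _ => mulr_ge0 (coef_ge0 j) (hs _)) Z1 (Ordinal (ltnW lt)) erefl.
    move=> /eqP; rewrite mulf_eq0 => /orP[|/eqP]; last exact: qdot_eq0.
    rewrite subr_eq0 -!natrX eqr_nat eqn_exp2r // => /eqP ni.
    have ni2 : n = i.+1 by exact: ni.
    by have := lt; rewrite {1}ni2 ltnn.
  exists (a n) => q; rewrite /spoly big_ord_recr /= big1 ?add0r // => i _.
  by rewrite (ha i (ltn_ord i)) mulr0.
case=> c Hc.
have ha := coef_extract n a c Hc.
have TE : T = n%:R ^+ 2 * S.
  apply/eqP; rewrite eq_sym -subr_eq0 KI.
  have -> : n%:R ^+ 2 * qdot (a 0%N) (a 0%N) = 0.
    have [n0|npos] := posnP n; first by rewrite n0 expr0n /= mul0r.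
    by rewrite ha // qdot0l mulr0.
  rewrite add0r big1 // => j _.
  case: (ltnP j.+1 n) => [lt|ge]; first by rewrite ha // qdot0l mulr0.
  have -> : j.+1 = n by apply/eqP; rewrite eqn_leq ge ltn_ord.
  by rewrite subrr mul0r.
by rewrite HD En TE.
Qed.
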